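(* Let $N\ge3$ and $p>p_S$. There is no function $u\in C^2(0,\infty)$ satisfying \[ u''+\frac{N-1}{s}u'+f(u)=0\ (0<s<\infty),\quad u(s)=As^{-\theta}(1+o(1))\ (s\downarrow0),\quad u(s)\to0\ (s\to\infty),\quad u>0\ \text{on }(0,\infty). \]
   Context: $f(u):=-u+u^p$, $\theta:=\frac{2}{p-1}$, $A:=\{\theta(N-2-\theta)\}^{1/(p-1)}$, $p_S:=\frac{N+2}{N-2}$. *)

(* Defs.v *)
From Stdlib Require Import Reals Lra.
Open Scope R_scope.

(* f(u) = -u + u^p ; only evaluated at u > 0 here, real exponent via Rpower. *)
Definition fnl (p u : R) : R := - u + Rpower u p.

Definition theta (p : R) : R := 2 / (p - 1).

Definition Acoef (N : nat) (p : R) : R :=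
  Rpower (theta p * (INR N - 2 - theta p)) (1 / (p - 1)).

Definition pS (N : nat) : R := (INR N + 2) / (INR N - 2).

Definition C2_pos (u u1 u2 : R -> R) : Prop :=
  forall s, 0 < s ->
    derivable_pt_lim u s (u1 s) /\
    derivable_pt_lim u1 s (u2 s) /\
    continuity_pt u2 s.

(* Main.v *)
Require Import Defs.
From Stdlib Require Import Reals.
From Stdlib Require Import Reals Lra Lia.
From Coquelicot Require Import Coquelicot.
Open Scope R_scope.

Lemma dec_le f f' a b : a <= b -> (forall c, a<=c<=b -> derivable_pt_lim f c (f' c)) ->
  (forall c, a<=c<=b -> f' c <= 0) -> f b <= f a.
Proof.
intros hab hd hs. destruct (Rle_lt_or_eq_dec _ _ hab) as [h|h].
- destruct (MVT_cor2 f f' a b h hd) as [c [E hc]].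
  assert (f' c <= 0) by (apply hs; lra). nra.
- subst; lra.
Qed.

Lemma inc_le f f' a b : a <= b -> (forall c, a<=c<=b -> derivable_pt_lim f c (f' c)) ->
  (forall c, a<=c<=b -> 0 <= f' c) -> f a <= f b.
Proof.
intros hab hd hs. destruct (Rle_lt_or_eq_dec _ _ hab) as [h|h].
- destruct (MVT_cor2 f f' a b h hd) as [c [E hc]].
  assert (0 <= f' c) by (apply hs; lra). nra.
- subst; lra.
Qed.

Lemma dec_lt f f' a b : a < b -> (forall c, a<=c<=b -> derivable_pt_lim f c (f' c)) ->
  (forall c, a<=c<=b -> f' c < 0) -> f b < f a.
Proof.
intros h hd hs.
destruct (MVT_cor2 f f' a b h hd) as [c [E hc]].
assert (f' c < 0) by (apply hs; lra). nra.
Qed.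

Lemma exp_pow_bound (n : nat) x : 0 <= x -> x ^ n <= INR (Factorial.fact n) * exp x.
Proof.
intros hx.
assert (hf: 0 < INR (Factorial.fact n)) by apply INR_fact_lt_0.
assert (H: x ^ n / INR (Factorial.fact n) <= exp x).
{ eapply Rle_trans; [|apply (exp_ge_taylor x n hx)].
  destruct n. { simpl. lra. }
  rewrite tech5.
  assert (0 <= sum_f_R0 (fun k => x ^ k / INR (Factorial.fact k)) n).
  { apply cond_pos_sum. intros k. apply Rmult_le_pos. apply pow_le; auto.
    left; apply Rinv_0_lt_compat, INR_fact_lt_0. }
  lra. }
apply (Rmult_le_compat_l (INR (Factorial.fact n))) in H; [|lra].
replace (INR (Factorial.fact n) * (x ^ n / INR (Factorial.fact n))) with (x^n) in H by (field; lra).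
exact H.
Qed.
Definition PP (N:nat) p (u u1 : R -> R) s := s^N * (u1 s^2/2 - u s^2/2 + Rpower (u s) (p+1)/(p+1)) + (INR N - 2)/2 * s^(N-1) * u s * u1 s.
Definition Pd (N:nat) p (u : R -> R) s := s^(N-1) * (- u s ^2 + Rpower (u s) (p+1) * (INR N/(p+1) - (INR N-2)/2)).
Lemma P_deriv (m:nat) p (u u1 u2 : R -> R) x : 0 < x -> 0 < u x -> 0 < p ->
  derivable_pt_lim u x (u1 x) -> derivable_pt_lim u1 x (u2 x) ->
  u2 x + (INR (S (S (S m))) - 1) / x * u1 x + (- u x + Rpower (u x) p) = 0 ->
  derivable_pt_lim (PP (S (S (S m))) p u u1) x (Pd (S (S (S m))) p u x).
Proof.
intros hx hu hp d1 d2 E.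
apply is_derive_Reals in d1. apply is_derive_Reals in d2.
apply is_derive_Reals. unfold PP, Pd.
replace (S (S (S m)) - 1)%nat with (S (S m)) by lia.
auto_derive.
- repeat split; try (eexists; eassumption).
  exists ((p+1) * Rpower (u x) (p+1-1)). apply is_derive_Reals, derivable_pt_lim_power; auto.
- replace (Derive (fun x0 => u x0) x) with (u1 x) by (symmetry; apply is_derive_unique; auto).
  replace (Derive (fun x0 => u1 x0) x) with (u2 x) by (symmetry; apply is_derive_unique; auto).
  replace (Derive (fun x0 => Rpower x0 (p+1)) (u x)) with ((p+1) * Rpower (u x) (p+1-1))
   by (symmetry; apply is_derive_unique; apply is_derive_Reals, derivable_pt_lim_power; auto).
  replace (p+1-1) with p by ring.
  rewrite Rpower_plus, Rpower_1 by auto.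
  assert (u2 x = - ((INR (S (S (S m))) - 1) / x * u1 x + (- u x + Rpower (u x) p))) by lra.
  rewrite H. set (Rp := Rpower (u x) p).
  change (match m with 0%nat => 1 | S _ => INR m + 1 end) with (INR (S m)).
  rewrite !S_INR. simpl. field. lra.
Qed.
Section Main.
Variables (m : nat) (p : R) (u u1 u2 : R -> R).
Hypothesis hp1 : 1 < p.
Hypothesis hc : INR (S (S (S m)))/(p+1) - (INR (S (S (S m))) - 2)/2 < 0.
Hypothesis hd1 : forall s, 0<s -> derivable_pt_lim u s (u1 s).
Hypothesis hd2 : forall s, 0<s -> derivable_pt_lim u1 s (u2 s).
Hypothesis hE : forall s, 0<s -> u2 s + (INR (S (S (S m))) - 1)/s * u1 s + (- u s + Rpower (u s) p) = 0.
Hypothesis hpos : forall s, 0<s -> 0 < u s.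

Definition PPm s := PP (S (S (S m))) p u u1 s.

Lemma Pdec a b : 0 < a -> a < b -> PPm b < PPm a.
Proof.
intros ha hab. unfold PPm.
apply (dec_lt _ (Pd (S (S (S m))) p u)); auto.
- intros c hc'. apply (P_deriv m p u u1 u2); try lra; auto. apply hpos; lra. apply hd1; lra. apply hd2; lra. apply hE; lra.
- intros c hc'. unfold Pd. assert (0 < u c) by (apply hpos; lra).
  assert (0 < Rpower (u c) (p+1)) by (unfold Rpower; apply exp_pos).
  assert (0 < c ^ (S (S (S m)) - 1)) by (apply pow_lt; lra).
  assert (0 < u c ^2) by (apply pow_lt; lra).
  assert (Rpower (u c) (p + 1) * (INR (S (S (S m))) / (p + 1) - (INR (S (S (S m))) - 2) / 2) < 0).
  { nra. }
  nra.
Qed.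

Lemma w_deriv x : 0 < x -> derivable_pt_lim (fun s => s^(S (S m)) * u1 s) x (x^(S (S m)) * (u x - Rpower (u x) p)).
Proof.
intros hx. pose proof (hd1 x hx) as d1. pose proof (hd2 x hx) as d2. pose proof (hE x hx) as E.
apply is_derive_Reals in d1. apply is_derive_Reals in d2. apply is_derive_Reals.
auto_derive. { eexists; eassumption. }
replace (Derive (fun x0 => u1 x0) x) with (u2 x) by (symmetry; apply is_derive_unique; auto).
assert (u2 x = - ((INR (S (S (S m))) - 1) / x * u1 x + (- u x + Rpower (u x) p))) by lra.
rewrite H. set (Rp := Rpower (u x) p).
change (match m with 0%nat => 1 | S _ => INR m + 1 end) with (INR (S m)).
rewrite !S_INR. simpl. field. lra.
Qed.

Lemma H_deriv x : 0 < x -> derivable_pt_lim (fun s => u1 s ^2 - u s ^2 / 2) x (2 * u1 x * u2 x - u x * u1 x).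
Proof.
intros hx. pose proof (hd1 x hx) as d1. pose proof (hd2 x hx) as d2.
apply is_derive_Reals in d1. apply is_derive_Reals in d2. apply is_derive_Reals.
auto_derive. { repeat split; eexists; eassumption. }
replace (Derive (fun x0 => u1 x0) x) with (u2 x) by (symmetry; apply is_derive_unique; auto).
replace (Derive (fun x0 => u x0) x) with (u1 x) by (symmetry; apply is_derive_unique; auto).
field.
Qed.

Lemma g_deriv x : 0 < x -> derivable_pt_lim (fun s => u s * exp (s/2)) x (exp (x/2) * (u1 x + u x / 2)).
Proof.
intros hx. pose proof (hd1 x hx) as d1.
apply is_derive_Reals in d1. apply is_derive_Reals.
auto_derive. { eexists; eassumption. }
replace (Derive (fun x0 => u x0) x) with (u1 x) by (symmetry; apply is_derive_unique; auto).
unfold Rdiv. ring.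
Qed.

Hypothesis hdecay : forall eps, 0<eps -> exists M, forall s, M < s -> Rabs (u s) < eps.

Lemma Rpower_pos' x y : 0 < Rpower x y.
Proof. unfold Rpower; apply exp_pos. Qed.

Lemma inf_part eta : 0 < eta -> exists s, 1 < s /\ - eta < PPm s.
Proof.
intros heta.
set (c0 := Rpower (/2) (/(p-1))).
assert (hc0 : 0 < c0) by apply Rpower_pos'.
destruct (hdecay c0 hc0) as [M hM].
set (S0 := Rmax M 1 + 1).
assert (hS0 : 1 < S0 /\ M < S0). { unfold S0; split; [pose proof (Rmax_r M 1)|pose proof (Rmax_l M 1)]; lra. }
assert (small : forall s, S0 <= s -> 0 < u s /\ Rpower (u s) p < u s / 2).
{ intros s hs. assert (hu: 0 < u s) by (apply hpos; lra). split; auto.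
  assert (h1 : u s < c0). { specialize (hM s ltac:(lra)). rewrite Rabs_right in hM; lra. }
  assert (h2 : Rpower (u s) (p-1) < Rpower c0 (p-1)) by (apply Rlt_Rpower_l; lra).
  unfold c0 in h2. rewrite Rpower_mult in h2.
  replace (/ (p-1) * (p-1)) with 1 in h2 by (field; lra).
  rewrite Rpower_1 in h2 by lra.
  replace p with (1 + (p-1)) at 1 by ring. rewrite Rpower_plus, Rpower_1 by lra.
  nra. }
assert (A : forall s, S0 <= s -> u1 s <= 0).
{ intros s1 hs1. destruct (Rle_or_lt (u1 s1) 0) as [h|h]; auto. exfalso.
  assert (hw : forall s, s1 <= s -> 0 < u1 s).
  { intros s hs.
    assert (s1 ^ (S (S m)) * u1 s1 <= s ^ (S (S m)) * u1 s).
    { apply (inc_le (fun s => s ^ (S (S m)) * u1 s) (fun x => x^(S (S m)) * (u x - Rpower (u x) p))); auto.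
      - intros c hc'. apply w_deriv. lra.
      - intros c hc'. destruct (small c ltac:(lra)). apply Rmult_le_pos. apply pow_le; lra. lra. }
    assert (0 < s1 ^ (S (S m))) by (apply pow_lt; lra).
    assert (0 < s ^ (S (S m))) by (apply pow_lt; lra).
    assert (0 < s1 ^ (S (S m)) * u1 s1) by (apply Rmult_lt_0_compat; lra).
    destruct (Rle_or_lt (u1 s) 0); auto. nra. }
  assert (hu : forall s, s1 <= s -> u s1 <= u s).
  { intros s hs. apply (inc_le u u1); auto.
    - intros c hc'. apply hd1. lra.
    - intros c hc'. left. apply hw. lra. }
  assert (hus1 : 0 < u s1) by (apply hpos; lra).
  destruct (hdecay (u s1) hus1) as [M' hM'].
  set (s := Rmax M' s1 + 1).
  assert (M' < s /\ s1 < s). { unfold s; split; [pose proof (Rmax_l M' s1)|pose proof (Rmax_r M' s1)]; lra. }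
  specialize (hM' s ltac:(lra)). specialize (hu s ltac:(lra)).
  rewrite Rabs_right in hM'; [lra| left; apply hpos; lra]. }
assert (B : forall s, S0 <= s -> u s / 2 <= u2 s).
{ intros s hs. pose proof (hE s ltac:(lra)). destruct (small s hs). pose proof (A s hs).
  assert (0 <= (INR (S (S (S m))) - 1) / s).
  { apply Rdiv_le_0_compat; [|lra]. rewrite !S_INR. pose proof (pos_INR m). lra. }
  nra. }
assert (C : forall s, S0 <= s -> 0 <= u1 s ^2 - u s ^2 / 2).
{ intros s1 hs1. destruct (Rle_or_lt 0 (u1 s1 ^2 - u s1 ^2 / 2)) as [h|h]; auto. exfalso.
  assert (hH : forall s, s1 <= s -> u1 s ^2 - u s ^2 / 2 <= u1 s1 ^2 - u s1 ^2 / 2).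
  { intros s hs. apply (dec_le (fun s => u1 s ^2 - u s ^2 / 2) (fun x => 2 * u1 x * u2 x - u x * u1 x)); auto.
    - intros c hc'. apply H_deriv. lra.
    - intros c hc'. pose proof (A c ltac:(lra)). pose proof (B c ltac:(lra)). nra. }
  assert (he : 0 < Rmin 1 (- (u1 s1 ^2 - u s1 ^2 / 2))) by (apply Rmin_glb_lt; lra).
  destruct (hdecay _ he) as [M' hM'].
  set (s := Rmax M' s1 + 1).
  assert (M' < s /\ s1 < s). { unfold s; split; [pose proof (Rmax_l M' s1)|pose proof (Rmax_r M' s1)]; lra. }
  specialize (hM' s ltac:(lra)). specialize (hH s ltac:(lra)).
  assert (hus : 0 < u s) by (apply hpos; lra).
  rewrite Rabs_right in hM' by lra.
  pose proof (Rmin_l 1 (- (u1 s1 ^2 - u s1 ^2 / 2))).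
  pose proof (Rmin_r 1 (- (u1 s1 ^2 - u s1 ^2 / 2))).
  assert (u s ^ 2 < u s) by nra.
  assert (0 <= u1 s ^ 2) by nra.
  lra. }
assert (D : forall s, S0 <= s -> u1 s <= - u s / 2).
{ intros s hs. pose proof (C s hs). pose proof (A s hs). destruct (small s hs). nra. }
set (G := u S0 * exp (S0/2)).
assert (E : forall s, S0 <= s -> u s * exp (s/2) <= G).
{ intros s hs. apply (dec_le (fun s => u s * exp (s/2)) (fun x => exp (x/2) * (u1 x + u x / 2))); auto.
  - intros c hc'. apply g_deriv. lra.
  - intros c hc'. pose proof (D c ltac:(lra)). pose proof (exp_pos (c/2)). nra. }
assert (F1 : forall s, S0 <= s -> u1 S0 <= u1 s).
{ intros s hs. apply (inc_le u1 u2); auto.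
  - intros c hc'. apply hd2. lra.
  - intros c hc'. pose proof (B c ltac:(lra)). destruct (small c ltac:(lra)). lra. }
assert (F2 : forall s, S0 <= s -> u s <= u S0).
{ intros s hs. apply (dec_le u u1); auto.
  - intros c hc'. apply hd1. lra.
  - intros c hc'. apply A. lra. }
set (NN := S (S (S m))).
set (Cst := 2 ^ (S NN) * INR (Factorial.fact (S NN))).
assert (Tay : forall s, 0 <= s -> s ^ NN * s <= Cst * exp (s/2)).
{ intros s hs. pose proof (exp_pow_bound (S NN) (s/2) ltac:(lra)) as T.
  unfold Rdiv in T. rewrite Rpow_mult_distr, pow_inv in T.
  assert (0 < 2 ^ S NN) by (apply pow_lt; lra).
  rewrite <- tech_pow_Rmult in T. unfold Cst. unfold Rdiv.
  apply (Rmult_le_compat_l (2 ^ S NN)) in T; [|lra].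
  replace (2 ^ S NN * (s * s ^ NN * / 2 ^ S NN)) with (s ^ NN * s) in T by (field; lra).
  lra. }
set (K3 := u S0 / 2 - (INR NN - 2) / 2 * u1 S0).
assert (hK3 : 0 <= K3).
{ unfold K3. pose proof (A S0 ltac:(lra)). destruct (small S0 ltac:(lra)).
  assert (0 <= (INR NN - 2)/2). { unfold NN. rewrite !S_INR. pose proof (pos_INR m). lra. }
  nra. }
assert (hG : 0 <= G) by (unfold G; destruct (small S0 ltac:(lra)); pose proof (exp_pos (S0/2)); nra).
assert (hCst : 0 <= Cst).
{ unfold Cst. apply Rmult_le_pos. apply pow_le; lra. apply pos_INR. }
assert (Low : forall s, S0 <= s -> - (K3 * (Cst * G)) / s <= PPm s).
{ intros s hs. unfold PPm, PP. fold NN.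
  destruct (small s hs) as [hu hup].
  pose proof (A s hs). pose proof (F1 s hs). pose proof (F2 s hs). pose proof (E s hs).
  pose proof (Tay s ltac:(lra)).
  assert (hsN : 0 < s ^ NN) by (apply pow_lt; lra).
  assert (hsN1 : 0 < s ^ (NN - 1)) by (apply pow_lt; lra).
  assert (hle : s ^ (NN - 1) <= s ^ NN) by (apply Rle_pow; [lra|lia]).
  assert (hn2 : 0 <= (INR NN - 2)/2). { unfold NN. rewrite !S_INR. pose proof (pos_INR m). lra. }
  assert (hR : 0 < Rpower (u s) (p+1)) by apply Rpower_pos'.
  assert (hp0 : 0 < p + 1) by lra.
  assert (t1 : 0 <= Rpower (u s) (p + 1) / (p + 1)) by (left; apply Rdiv_lt_0_compat; lra).
  assert (t2 : 0 <= u1 s ^ 2 / 2) by (pose proof (pow2_ge_0 (u1 s)); lra).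
  assert (key : s ^ NN * u s * s <= Cst * G).
  { pose proof (exp_pos (s/2)). nra. }
  assert (lb : - (s ^ NN * u s) * K3 <= s ^ NN * (u1 s ^ 2 / 2 - u s ^ 2 / 2 + Rpower (u s) (p + 1) / (p + 1)) +
    (INR NN - 2) / 2 * s ^ (NN - 1) * u s * u1 s).
  { unfold K3.
    assert (a1 : - (s ^ NN * u s ^2 / 2) <= s ^ NN * (u1 s ^ 2 / 2 - u s ^ 2 / 2 + Rpower (u s) (p + 1) / (p + 1))) by nra.
    assert (a2 : u s * u s <= u s * u S0) by nra.
    assert (a3 : (INR NN - 2) / 2 * s ^ NN * u s * u1 S0 <= (INR NN - 2) / 2 * s ^ (NN - 1) * u s * u1 s).
    { assert (u1 S0 <= 0) by (apply A; lra).
      assert (q1 : 0 <= (s ^ NN - s ^ (NN-1)) * (u s * (- u1 S0))) by (apply Rmult_le_pos; [lra|apply Rmult_le_pos; lra]).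
      assert (q2 : 0 <= s ^ (NN-1) * u s * (u1 s - u1 S0)) by (apply Rmult_le_pos; [apply Rmult_le_pos; lra| lra]).
      assert (s ^ NN * u s * u1 S0 <= s ^ (NN-1) * u s * u1 S0) by nra.
      assert (s ^ (NN-1) * u s * u1 S0 <= s ^ (NN-1) * u s * u1 s) by nra.
      nra. }
    nra. }
  assert (0 <= s ^ NN * u s) by nra.
  assert (- (K3 * (Cst * G)) / s <= - (s ^ NN * u s) * K3).
  { unfold Rdiv. apply (Rmult_le_reg_r s); [lra|].
    replace (- (K3 * (Cst * G)) * / s * s) with (- (K3 * (Cst * G))) by (field; lra).
    nra. }
  lra. }
set (s := Rmax S0 (K3 * (Cst * G) / eta) + 1).
assert (S0 < s /\ K3 * (Cst * G) / eta < s).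
{ unfold s; split; [pose proof (Rmax_l S0 (K3 * (Cst * G) / eta))|pose proof (Rmax_r S0 (K3 * (Cst * G) / eta))]; lra. }
exists s. split; [lra|].
pose proof (Low s ltac:(lra)).
assert (K3 * (Cst * G) < eta * s).
{ destruct H as [_ H]. apply (Rmult_lt_compat_l eta) in H; auto.
  replace (eta * (K3 * (Cst * G) / eta)) with (K3 * (Cst * G)) in H by (field; lra). lra. }
assert (- eta < - (K3 * (Cst * G)) / s).
{ apply (Rmult_lt_reg_r s); [lra|]. unfold Rdiv.
  replace (- (K3 * (Cst * G)) * / s * s) with (- (K3 * (Cst * G))) by (field; lra). lra. }
lra.
Qed.
End Main.
Lemma exp_le_mono a b : a <= b -> exp a <= exp b.
Proof. intros h. destruct (Rle_lt_or_eq_dec _ _ h) as [h'|h']. left; apply exp_increasing; auto. subst; lra. Qed.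

Lemma Rpower_decr x y z : 0 < x -> x <= y -> z <= 0 -> Rpower y z <= Rpower x z.
Proof.
intros hx hxy hz. unfold Rpower. apply exp_le_mono.
destruct (Rle_lt_or_eq_dec _ _ hxy) as [h|h]; [|subst; lra].
pose proof (ln_increasing x y hx h). nra.
Qed.

Section Zero.
Variables (m : nat) (p : R) (u u1 : R -> R).
Hypothesis hp1 : 1 < p.
Hypothesis ha : 0 < INR (S (S (S m))) - 2 - 2 * theta p.
Hypothesis hd1 : forall s, 0<s -> derivable_pt_lim u s (u1 s).
Hypothesis hpos : forall s, 0<s -> 0 < u s.
Variables (K delta : R).
Hypothesis hKp : 0 < K.
Hypothesis hdel : 0 < delta.
Hypothesis hK : forall s, 0 < s < delta -> u s <= K * Rpower s (- theta p).

Lemma zero_part eps : 0 < eps -> exists xi, 0 < xi < 1/2 /\ PP (S (S (S m))) p u u1 xi <= eps.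
Proof.
intros heps.
set (th := theta p). set (NN := S (S (S m))). set (a := INR NN - 2 - 2 * th).
assert (ha' : 0 < a) by (unfold a, th, NN; exact ha).
assert (hth : 0 < th) by (unfold th, theta; apply Rdiv_lt_0_compat; lra).
assert (hthp : th * p = 2 + th) by (unfold th, theta; field; lra).
assert (hn2 : 0 <= (INR NN - 2)/2). { unfold NN. rewrite !S_INR. pose proof (pos_INR m). lra. }
set (K2 := 2 * K * (1 + Rpower 2 th)).
assert (hK2 : 0 < K2) by (unfold K2; pose proof (Rpower_pos' 2 th); nra).
set (C0 := K2^2/2 + (INR NN-2)/2 * K * K2 + Rpower K (p+1)/(p+1)).
assert (hC0 : 0 < C0).
{ unfold C0. pose proof (Rpower_pos' K (p+1)).
  assert (0 < Rpower K (p+1)/(p+1)) by (apply Rdiv_lt_0_compat; lra).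
  assert (0 <= (INR NN-2)/2 * K * K2) by (apply Rmult_le_pos; [apply Rmult_le_pos|]; lra).
  nra. }
set (t := Rmin (delta/2) (Rmin (1/2) (Rpower (eps/C0) (/a)))).
assert (ht : 0 < t /\ t < delta /\ t <= 1/2 /\ t <= Rpower (eps/C0) (/a)).
{ unfold t. pose proof (Rpower_pos' (eps/C0) (/a)).
  pose proof (Rmin_l (delta/2) (Rmin (1/2) (Rpower (eps/C0) (/a)))).
  pose proof (Rmin_r (delta/2) (Rmin (1/2) (Rpower (eps/C0) (/a)))).
  pose proof (Rmin_l (1/2) (Rpower (eps/C0) (/a))).
  pose proof (Rmin_r (1/2) (Rpower (eps/C0) (/a))).
  repeat split; try lra. repeat apply Rmin_glb_lt; lra. }
destruct ht as [ht0 [htd [ht12 hte]]].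
destruct (MVT_cor2 u u1 (t/2) t ltac:(lra)) as [xi [Emvt hxi]].
{ intros c hc'. apply hd1. lra. }
exists xi. split; [lra|].
set (B := Rpower xi (- th)).
assert (hB : 0 < B) by apply Rpower_pos'.
assert (hUxi : u xi <= K * B) by (apply hK; lra).
assert (hUt : u t <= K * B).
{ eapply Rle_trans; [apply hK; lra|]. apply Rmult_le_compat_l; [lra|].
  apply Rpower_decr; lra. }
assert (hUt2 : u (t/2) <= K * Rpower 2 th * B).
{ eapply Rle_trans; [apply hK; lra|].
  assert (Rpower (t/2) (-th) <= Rpower (xi/2) (-th)) by (apply Rpower_decr; lra).
  assert (Rpower (xi/2) (-th) = Rpower 2 th * B).
  { unfold B. replace (xi/2) with (/2 * xi) by field.
    rewrite <- Rpower_mult_distr by lra. f_equal.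
    unfold Rpower. rewrite ln_Rinv by lra. f_equal. ring. }
  rewrite H0 in H. fold th. rewrite Rmult_assoc. apply Rmult_le_compat_l; lra. }
assert (hu_t : 0 < u t) by (apply hpos; lra).
assert (hu_t2 : 0 < u (t/2)) by (apply hpos; lra).
assert (hu_xi : 0 < u xi) by (apply hpos; lra).
set (X := xi * u1 xi).
assert (hX : Rabs X <= K2 * B).
{ unfold X. rewrite Rabs_mult, (Rabs_right xi) by lra.
  assert (Rabs (u1 xi) * t = 2 * Rabs (u t - u (t/2))).
  { rewrite Emvt. rewrite Rabs_mult. rewrite (Rabs_right (t - t/2)) by lra. field. }
  assert (Rabs (u t - u (t/2)) <= u t + u (t/2)).
  { unfold Rabs; destruct (Rcase_abs (u t - u (t/2))); lra. }
  pose proof (Rabs_pos (u1 xi)).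
  assert (xi * Rabs (u1 xi) <= t * Rabs (u1 xi)) by nra.
  unfold K2. nra. }
assert (hX2 : X^2 <= (K2 * B)^2).
{ rewrite <- (pow2_abs X). pose proof (Rabs_pos X). nra. }
assert (hUX : u xi * X <= K * K2 * B^2).
{ assert (X <= K2*B). { unfold Rabs in hX; destruct (Rcase_abs X); lra. }
  assert (u xi * X <= u xi * (K2 * B)) by (apply Rmult_le_compat_l; lra).
  assert (0 < K2*B) by (apply Rmult_lt_0_compat; lra).
  assert (u xi * (K2 * B) <= K * B * (K2 * B)) by (apply Rmult_le_compat_r; lra).
  replace (K * K2 * B^2) with (K * B * (K2 * B)) by ring. lra. }
set (Z := xi ^ (S m)).
assert (hZ : 0 < Z) by (apply pow_lt; lra).
assert (hZB : Z * B^2 = Rpower xi a).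
{ unfold Z, B, a. rewrite <- Rpower_pow by lra. unfold NN. rewrite !S_INR.
  replace (INR m + 1 + 1 + 1 - 2 - 2 * th) with ((INR m + 1) + (- th) + (- th)) by ring.
  rewrite !Rpower_plus. simpl. ring. }
set (R := Rpower (u xi) (p+1)).
assert (hR : R <= Rpower K (p+1) * Rpower B (p+1)).
{ unfold R. rewrite Rpower_mult_distr by lra. apply Rle_Rpower_l; lra. }
assert (hxN : xi ^ NN * Rpower B (p+1) = Rpower xi a).
{ unfold B, a. rewrite Rpower_mult. rewrite <- Rpower_pow by lra. rewrite <- Rpower_plus.
  f_equal. replace (- th * (p+1)) with (- (th * p) - th) by ring. rewrite hthp. ring. }
assert (hxa : Rpower xi a <= eps / C0).
{ apply Rle_trans with (Rpower t a).
  - left. apply Rlt_Rpower_l; lra.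
  - apply Rle_trans with (Rpower (Rpower (eps/C0) (/a)) a).
    + apply Rle_Rpower_l; lra.
    + rewrite Rpower_mult. replace (/a * a) with 1 by (field; lra). rewrite Rpower_1. lra.
      apply Rdiv_lt_0_compat; lra. }
assert (hPP : PP NN p u u1 xi = Z * (X^2/2 + (INR NN - 2)/2 * u xi * X) + xi ^ NN * (- u xi ^2 / 2 + R / (p+1))).
{ unfold PP, Z, X, R, NN. replace (S (S (S m)) - 1)%nat with (S (S m)) by lia. simpl. field. lra. }
fold NN. rewrite hPP.
assert (hxN0 : 0 < xi ^ NN) by (apply pow_lt; lra).
assert (t1 : Z * (X^2/2 + (INR NN - 2)/2 * u xi * X) <= Z * B^2 * (K2^2/2 + (INR NN-2)/2 * K * K2)).
{ assert (X^2/2 + (INR NN - 2)/2 * u xi * X <= B^2 * (K2^2/2 + (INR NN-2)/2 * K * K2)).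
  { assert ((INR NN - 2)/2 * (u xi * X) <= (INR NN - 2)/2 * (K * K2 * B^2)) by (apply Rmult_le_compat_l; lra).
    nra. }
  nra. }
assert (t2 : xi ^ NN * (- u xi ^2 / 2 + R / (p+1)) <= Rpower K (p+1) / (p+1) * Rpower xi a).
{ rewrite <- hxN.
  assert (0 < u xi ^ 2) by nra.
  assert (R / (p+1) <= Rpower K (p + 1) * Rpower B (p + 1) / (p+1)) by (apply Rmult_le_compat_r; [left; apply Rinv_0_lt_compat; lra| lra]).
  assert (xi ^ NN * (- u xi ^2 / 2 + R / (p+1)) <= xi ^ NN * (Rpower K (p + 1) * Rpower B (p + 1) / (p+1))).
  { apply Rmult_le_compat_l; lra. }
  eapply Rle_trans; [exact H1|]. right. field. lra. }
assert (C0 * Rpower xi a <= eps).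
{ apply (Rmult_le_compat_l C0) in hxa; [|lra]. replace (C0 * (eps / C0)) with eps in hxa by (field; lra). exact hxa. }
unfold C0 in H. rewrite hZB in t1. nra.
Qed.

End Zero.

Theorem lemma4p7 (N : nat) (p : R) (hN : (3 <= N)%nat) (hp : pS N < p) :
  ~ (exists u u1 u2 : R -> R,
        C2_pos u u1 u2 /\
        (forall s, 0 < s -> u2 s + (INR N - 1) / s * u1 s + fnl p (u s) = 0) /\
        (exists r : R -> R,
            (forall s, 0 < s ->
               u s = Acoef N p * Rpower s (- theta p) * (1 + r s)) /\
            (forall eps, 0 < eps -> exists delta, 0 < delta /\
               forall s, 0 < s < delta -> Rabs (r s) < eps)) /\
        (forall eps, 0 < eps -> exists M, forall s, M < s -> Rabs (u s) < eps) /\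
        (forall s, 0 < s -> 0 < u s)).
Proof.
intros [u [u1 [u2 [hC2 [hE [[r [hr1 hr2]] [hdec hpos]]]]]]].
destruct N as [|[|[|m]]]; try lia.
unfold pS in hp. unfold fnl in hE.
assert (hn : INR (S (S (S m))) = INR m + 3) by (rewrite !S_INR; ring).
pose proof (pos_INR m) as hm.
assert (hpn : INR (S (S (S m))) + 2 < p * (INR (S (S (S m))) - 2)).
{ rewrite hn in hp |- *. apply (Rmult_lt_compat_r (INR m + 3 - 2)) in hp; [|lra].
  replace ((INR m + 3 + 2) / (INR m + 3 - 2) * (INR m + 3 - 2)) with (INR m + 3 + 2) in hp by (field; lra).
  lra. }
rewrite hn in hpn.
assert (hp1 : 1 < p) by nra.
assert (hc : INR (S (S (S m)))/(p+1) - (INR (S (S (S m))) - 2)/2 < 0).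
{ rewrite hn. apply (Rmult_lt_reg_r (2 * (p+1))); [lra|].
  replace ((INR m + 3) / (p + 1) - (INR m + 3 - 2) / 2) with (((INR m + 3) * 2 - (INR m + 1) * (p+1)) / (2 * (p+1))) by (field; lra).
  replace (((INR m + 3) * 2 - (INR m + 1) * (p + 1)) / (2 * (p + 1)) * (2 * (p + 1))) with ((INR m + 3) * 2 - (INR m + 1) * (p + 1)) by (field; lra).
  nra. }
assert (ha : 0 < INR (S (S (S m))) - 2 - 2 * theta p).
{ rewrite hn. unfold theta.
  replace (INR m + 3 - 2 - 2 * (2 / (p - 1))) with (((INR m + 1) * (p-1) - 4) / (p-1)) by (field; lra).
  apply Rdiv_lt_0_compat; nra. }
assert (hd1 : forall s, 0<s -> derivable_pt_lim u s (u1 s)) by (intros s hs; apply (hC2 s hs)).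
assert (hd2 : forall s, 0<s -> derivable_pt_lim u1 s (u2 s)) by (intros s hs; apply (hC2 s hs)).
destruct (hr2 1 ltac:(lra)) as [delta [hdel hdel']].
set (A := Acoef (S (S (S m))) p).
assert (hA : 0 < A) by apply Rpower_pos'.
assert (hK : forall s, 0 < s < delta -> u s <= (2 * A) * Rpower s (- theta p)).
{ intros s hs. rewrite hr1 by lra. fold A. specialize (hdel' s hs).
  pose proof (Rpower_pos' s (- theta p)).
  assert (r s < 1) by (unfold Rabs in hdel'; destruct (Rcase_abs (r s)); lra).
  assert (0 < A * Rpower s (- theta p)) by (apply Rmult_lt_0_compat; lra).
  nra. }
assert (Pdec' : forall a b, 0 < a -> a < b -> PPm m p u u1 b < PPm m p u u1 a).
{ intros a b h1 h2. eapply Pdec; eauto. }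
assert (hhalf : PPm m p u u1 (1/2) <= 0).
{ destruct (Rle_or_lt (PPm m p u u1 (1/2)) 0) as [h|h]; auto. exfalso.
  destruct (zero_part m p u u1 hp1 ha hd1 hpos (2*A) delta ltac:(lra) hdel hK _ h) as [xi [hxi hP]].
  pose proof (Pdec' xi (1/2) ltac:(lra) ltac:(lra)). unfold PPm in *. lra. }
assert (h1 : PPm m p u u1 1 < 0) by (pose proof (Pdec' (1/2) 1 ltac:(lra) ltac:(lra)); lra).
destruct (inf_part m p u u1 u2 hp1 hd1 hd2 hE hpos hdec (- PPm m p u u1 1) ltac:(lra)) as [s [hs hPs]].
pose proof (Pdec' 1 s ltac:(lra) hs). lra.
Qed.
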